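(* Let $\mathbb{K}$ be an algebraically closed field of characteristic zero and $N=2m\ge 2$ even. Then $\operatorname{Der}(\mathcal{H}_{N})\cong \mathcal{H}_{N}$.
   Context: Let $A_N=\mathbb{K}[t_1^{\pm1},\dots,t_N^{\pm1}]$, $d_i=t_i\frac{\partial}{\partial t_i}$, and $t^{\bm r}=t_1^{r_1}\cdots t_N^{r_N}$ for $\bm r\in\mathbb{Z}^N$. Let $(\cdot,\cdot)$ be the standard bilinear form on $\mathbb{K}^N$, $(e_i,e_j)=\delta_{ij}$. For $u\in\mathbb{K}^N$, $\bm r\in\mathbb{Z}^N$ put $D(u,\bm r)=\sum_i u_i t^{\bm r}d_i$. Let $\bm J=\begin{pmatrix} O_m & I_m\\ -I_m & O_m\end{pmatrix}$, $\overline{\bm r}=\bm J\bm r$, $h_{\bm r}=D(\overline{\bm r},\bm r)$ (so $h_{\bm 0}=0$), $\mathfrak h=\operatorname{span}_{\mathbb{K}}\{d_1,\dots,d_N\}$. The Hamiltonian Lie algebra is $\mathcal{H}_N=\operatorname{span}_{\mathbb{K}}\{h_{\bm r}:\bm r\ne\bm 0\}\oplus\mathfrak h$ with commutator bracket, $[h_{\bm r},h_{\bm s}]=(\overline{\bm r},\bm s)h_{\bm r+\bm s}$, $[D(u,\bm 0),h_{\bm r}]=(u,\bm r)h_{\bm r}$. $\operatorname{Der}$ denotes the Lie algebra of derivations. *)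

(* Defs.v *)
From HB Require Import structures.
From mathcomp Require Import all_boot all_order all_algebra.
From mathcomp Require Import finmap.
From mathcomp Require Import monalg.

Set Implicit Arguments.
Unset Strict Implicit.
Unset Printing Implicit Defensive.

Import Order.TTheory GRing.Theory Num.Theory.
Local Open Scope ring_scope.

Section Hamiltonian.
Variables (K : fieldType) (m : nat).

(* N = 2m = m + m; vectors r in Z^N are integer column vectors. *)
Definition latt := 'cV[int]_(m + m).

Definition Jmx : 'M[int]_(m + m) := block_mx 0 1%:M (- 1%:M) 0.

Definition rbar (r : latt) : latt := Jmx *m r.

Definition pairK (u s : latt) : K := \sum_(i < m + m) ((u i 0) * (s i 0))%:~R.

(* Basis of H_N: h_r for r <> 0 (tag inl), and d_i for i < N (tag inr),
   where d_1,...,d_N span the abelian subalgebra \mathfrak h. *)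
Definition HKey := ({r : latt | r != 0} + 'I_(m + m))%type.

Definition HN := {malg K[HKey]}.

(* h_r as an element of H_N, with the convention h_0 = 0 *)
Definition hvec (c : K) (t : latt) : HN :=
  match insub t with
  | Some t' => << c *g (inl t' : HKey) >>
  | None => 0
  end.

Definition basis_br (a b : HKey) : HN :=
  match a, b with
  | inl r, inl s => hvec (pairK (rbar (val r)) (val s)) (val r + val s)
  | inr i, inl s => << ((val s) i 0)%:~R *g (inl s : HKey) >>
  | inl r, inr j => << (- ((val r) j 0)%:~R) *g (inl r : HKey) >>
  | inr _, inr _ => 0
  end.

Definition Hbr (x y : HN) : HN :=
  \sum_(a <- msupp x) \sum_(b <- msupp y) (x@_a * y@_b) *: basis_br a b.

Definition is_derivation (D : HN -> HN) : Prop :=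
  (forall (c : K) (x y : HN), D (c *: x + y) = c *: D x + D y) /\
  (forall x y : HN, D (Hbr x y) = Hbr (D x) y + Hbr x (D y)).

Definition Der_iso_HN : Prop :=
  exists phi : (HN -> HN) -> HN,
    [/\ (forall (a b : K) (D1 D2 : HN -> HN),
           is_derivation D1 -> is_derivation D2 ->
           phi (fun x => a *: D1 x + b *: D2 x) = a *: phi D1 + b *: phi D2),
        (forall D1 D2 : HN -> HN,
           is_derivation D1 -> is_derivation D2 ->
           phi (fun x => D1 (D2 x) - D2 (D1 x)) = Hbr (phi D1) (phi D2)),
        (forall D1 D2 : HN -> HN,
           is_derivation D1 -> is_derivation D2 -> phi D1 = phi D2 -> D1 = D2)
      & (forall y : HN, exists2 D, is_derivation D & phi D = y)].

End Hamiltonian.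

(* Main.v *)
Require Import Defs.
From HB Require Import structures.
From mathcomp Require Import all_boot all_order all_algebra.
From mathcomp Require Import finmap monalg.
From mathcomp Require Import ring zify.
From Stdlib Require Import ClassicalEpsilon FunctionalExtensionality.
Set Implicit Arguments.
Unset Strict Implicit.
Unset Printing Implicit Defensive.
Import Order.TTheory GRing.Theory Num.Theory.
Local Open Scope ring_scope.

Section A.
Variables (K : fieldType) (m : nat).
Local Notation HN := (HN K m).
Local Notation HKey := (HKey m).
Local Notation latt := (latt m).
Local Notation Hbr := (@Hbr K m).
Local Notation br := (@basis_br K m).
Local Notation pK := (@pairK K m).

Definition B (k : HKey) : HN := << k >>.

Lemma monoZ (c : K) (k : HKey) : << c *g k >> = c *: B k :> HN.
Proof. by apply/malgP => k'; rewrite mcoeffZ !mcoeffU mulr_natr. Qed.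

Lemma mcoefBB (k k' : HKey) : (B k)@_k' = (k == k')%:R.
Proof. by rewrite /B mcoeffU. Qed.

Definition Lx (F : HKey -> HN) (x : HN) : HN :=
  \sum_(a <- msupp x) x@_a *: F a.

Lemma LxEw F x (d : {fset HKey}) : (msupp x `<=` d)%fset ->
  Lx F x = \sum_(a <- d) x@_a *: F a.
Proof.
move=> le; rewrite /Lx (big_fset_incl _ le) // => a _ /mcoeff_outdom ->.
by rewrite scale0r.
Qed.

Lemma Lx_lin F (c : K) x y : Lx F (c *: x + y) = c *: Lx F x + Lx F y.
Proof.
set d := (msupp x `|` msupp y)%fset.
have hx : (msupp x `<=` d)%fset by rewrite fsubsetUl.
have hy : (msupp y `<=` d)%fset by rewrite fsubsetUr.
have hxy : (msupp (c *: x + y) `<=` d)%fset.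
  apply: fsubset_trans (msuppD_le _ _) _.
  by rewrite fsetUSS // msuppZ_le.
rewrite (LxEw _ hx) (LxEw _ hy) (LxEw _ hxy) scaler_sumr -big_split /=.
by apply: eq_bigr => a _; rewrite mcoeffD mcoeffZ scalerDl scalerA.
Qed.

Lemma LxB F k : Lx F (B k) = F k.
Proof. by rewrite /Lx /B msuppU oner_eq0 big_seq_fset1 mcoeffUU scale1r. Qed.

Lemma LxBid x : Lx B x = x.
Proof.
rewrite [RHS]monalgE /Lx; apply: eq_bigr => a _; by rewrite monoZ.
Qed.

Lemma Lx0 x : Lx (fun _ => 0) x = 0.
Proof. by rewrite /Lx big1 // => a _; rewrite scaler0. Qed.

Lemma Lx_coef F x k : (Lx F x)@_k = \sum_(a <- msupp x) x@_a * (F a)@_k.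
Proof. by rewrite /Lx raddf_sum; apply: eq_bigr => a _; apply: mcoeffZ. Qed.

Lemma sum_pick (x : HN) (g : HKey -> K) k0 :
  (forall a, a != k0 -> g a = 0) ->
  \sum_(a <- msupp x) x@_a * g a = x@_k0 * g k0.
Proof.
move=> h.
have le : (msupp x `<=` (msupp x `|` [fset k0]))%fset by rewrite fsubsetUl.
rewrite (big_fset_incl _ le); last by move=> a _ /mcoeff_outdom ->; rewrite mul0r.
rewrite (big_fsetD1 k0) ?in_fsetU ?in_fset1 ?eqxx ?orbT //=.
rewrite big1_fset ?addr0 // => a; rewrite in_fsetD1 => /andP[ne _] _.
by rewrite h ?mulr0.
Qed.

Definition islin (f : HN -> HN) := forall (c : K) x y, f (c *: x + y) = c *: f x + f y.

Lemma islin0 f : islin f -> f 0 = 0.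
Proof.
move=> h; have := h 1 0 0; rewrite !scale1r addr0 => E.
by apply: (@addrI _ (f 0)); rewrite addr0 -E.
Qed.

Lemma islinZ f c x : islin f -> f (c *: x) = c *: f x.
Proof. by move=> h; rewrite -[c *: x]addr0 h (islin0 h) addr0. Qed.

Lemma islinD f x y : islin f -> f (x + y) = f x + f y.
Proof. by move=> h; have := h 1 x y; rewrite !scale1r. Qed.

Lemma islinE f x : islin f -> f x = Lx (fun a => f (B a)) x.
Proof.
move=> h; rewrite -{1}(LxBid x) /Lx.
elim: (msupp x : seq _) => [|a s IH]; first by rewrite !big_nil islin0.
by rewrite !big_cons h IH.
Qed.

Lemma Lx_islin F : islin (Lx F).
Proof. by move=> c x y; rewrite Lx_lin. Qed.

Lemma Lx_linF F G (c : K) x :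
  Lx (fun a => c *: F a + G a) x = c *: Lx F x + Lx G x.
Proof.
rewrite /Lx scaler_sumr -big_split /=; apply: eq_bigr => a _.
by rewrite scalerDr !scalerA mulrC.
Qed.

Lemma eq_Lx F G x : (forall a, F a = G a) -> Lx F x = Lx G x.
Proof. by move=> h; rewrite /Lx; apply: eq_bigr => a _; rewrite h. Qed.

Lemma HbrE x y : Hbr x y = Lx (fun a => Lx (br a) y) x.
Proof.
rewrite /Hbr /Lx; apply: eq_bigr => a _; rewrite scaler_sumr.
by apply: eq_bigr => b _; rewrite scalerA.
Qed.

Lemma Hbr_linl y : islin (fun x => Hbr x y).
Proof. by move=> c x z; rewrite !HbrE Lx_lin. Qed.

Lemma Hbr_linr x : islin (Hbr x).
Proof.
move=> c y z; rewrite !HbrE -Lx_linF; apply: eq_Lx => a; exact: Lx_lin.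
Qed.

Lemma HbrBB a b : Hbr (B a) (B b) = br a b.
Proof. by rewrite HbrE LxB LxB. Qed.


Implicit Types (p q r s t u v w z : latt).
Definition H (t : latt) : HN := @hvec K m 1 t.
Definition kdeg (a : HKey) : latt := match a with inl r => val r | inr _ => 0 end.
Definition kvec (a : HKey) : latt := match a with inl _ => 0 | inr i => delta_mx i ord0 end.
Definition om (p q : latt) : K := pK (rbar p) q.
Definition beta (p v q w : latt) : K := om p q + pK v q - pK w p.

Lemma hvecZ c t : @hvec K m c t = c *: H t.
Proof.
rewrite /H /hvec; case: insubP => [u _ _|_]; last by rewrite scaler0.
by rewrite !monoZ scalerA mulr1.
Qed.

Lemma H0 : H 0 = 0.
Proof. by rewrite /H /hvec insubF ?eqxx. Qed.

Lemma Hval (r : {r : latt | r != 0}) : H (val r) = B (inl r).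
Proof. by rewrite /H /hvec valK monoZ scale1r. Qed.

Lemma pKDl u v s : pK (u + v) s = pK u s + pK v s.
Proof. by rewrite /pairK -big_split; apply: eq_bigr => i _; rewrite mxE mulrDl intrD. Qed.
Lemma pKDr u s t : pK u (s + t) = pK u s + pK u t.
Proof. by rewrite /pairK -big_split; apply: eq_bigr => i _; rewrite mxE mulrDr intrD. Qed.
Lemma pK0l s : pK 0 s = 0.
Proof. by rewrite /pairK big1 // => i _; rewrite mxE mul0r. Qed.
Lemma pK0r s : pK s 0 = 0.
Proof. by rewrite /pairK big1 // => i _; rewrite mxE mulr0. Qed.
Lemma pKNl u s : pK (- u) s = - pK u s.
Proof. by rewrite /pairK -sumrN; apply: eq_bigr => i _; rewrite mxE mulNr intrN. Qed.
Lemma pKNr u s : pK u (- s) = - pK u s.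
Proof. by rewrite /pairK -sumrN; apply: eq_bigr => i _; rewrite mxE mulrN intrN. Qed.
Lemma pK_delta i s : pK (delta_mx i ord0) s = (s i ord0)%:~R.
Proof.
rewrite /pairK (bigD1 i) //= big1 ?addr0 => [|j ji]; first by rewrite mxE !eqxx mul1r.
by rewrite mxE (negPf ji) mul0r.
Qed.

Lemma rbarD p q : rbar (p + q) = rbar p + rbar q.
Proof. by rewrite /rbar mulmxDr. Qed.
Lemma rbar0 : @rbar m 0 = 0.
Proof. by rewrite /rbar mulmx0. Qed.
Lemma rbarN p : rbar (- p) = - rbar p.
Proof. by rewrite /rbar mulmxN. Qed.

Lemma omDl p q s : om (p + q) s = om p s + om q s.
Proof. by rewrite /om rbarD pKDl. Qed.
Lemma omDr p q s : om p (q + s) = om p q + om p s.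
Proof. by rewrite /om pKDr. Qed.
Lemma om0l s : om 0 s = 0.
Proof. by rewrite /om rbar0 pK0l. Qed.
Lemma om0r s : om s 0 = 0.
Proof. by rewrite /om pK0r. Qed.


Definition wi p q : int := \sum_(i < m + m) (rbar p) i 0 * q i 0.

Lemma omE p q : om p q = (wi p q)%:~R.
Proof. by rewrite /om /pairK /wi rmorph_sum. Qed.

Lemma JT : (Jmx m)^T = - Jmx m.
Proof.
rewrite /Jmx tr_block_mx opp_block_mx !trmx0 !oppr0 linearN /= tr_scalar_mx.
by rewrite opprK.
Qed.

Definition gJ p q : int := (p^T *m Jmx m *m q) 0 0.

Lemma wiE p q : wi p q = - gJ p q.
Proof.
rewrite /gJ /wi /rbar.
have -> : (p^T *m Jmx m *m q) = - ((Jmx m *m p)^T *m q).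
  by rewrite trmx_mul JT mulmxN mulNmx opprK.
by rewrite mxE opprK mxE; apply: eq_bigr => i _; rewrite [in RHS]mxE.
Qed.

Lemma gJ_anti p q : gJ q p = - gJ p q.
Proof.
rewrite /gJ.
have -> : (q^T *m Jmx m *m p) 0 0 = ((q^T *m Jmx m *m p)^T) 0 0 by rewrite [RHS]mxE.
by rewrite !trmx_mul trmxK JT mulNmx mulmxN mulmxA mxE.
Qed.

Lemma wi_anti p q : wi q p = - wi p q.
Proof. by rewrite !wiE gJ_anti. Qed.

Lemma om_anti p q : om q p = - om p q.
Proof. by rewrite !omE wi_anti intrN. Qed.


Lemma br_basis a b :
  br a b = beta (kdeg a) (kvec a) (kdeg b) (kvec b) *: H (kdeg a + kdeg b).
Proof.
case: a => [r|i]; case: b => [s|j] /=.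
- by rewrite hvecZ /beta !pK0l subr0 addr0.
- by rewrite monoZ -Hval /beta pK0r om0r add0r pK_delta sub0r addr0.
- by rewrite monoZ -Hval /beta pK0r om0l add0r pK_delta subr0 add0r.
- by rewrite addr0 H0 scaler0.
Qed.

Lemma Hbr0r x : Hbr x 0 = 0.
Proof. exact: islin0 (Hbr_linr x). Qed.
Lemma Hbr0l y : Hbr 0 y = 0.
Proof. exact: islin0 (Hbr_linl y). Qed.

Lemma Hbr_BH a t : Hbr (B a) (H t) = beta (kdeg a) (kvec a) t 0 *: H (kdeg a + t).
Proof.
have [->|tn0] := eqVneq t 0; last first.
  have -> : t = val (exist (fun r : latt => r != 0) t tn0) by [].
  by rewrite Hval HbrBB br_basis.
 rewrite H0 Hbr0r /beta om0r pK0r pK0l subr0 addr0.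
by rewrite scale0r.
Qed.

Lemma Hbr_HB t b : Hbr (H t) (B b) = beta t 0 (kdeg b) (kvec b) *: H (t + kdeg b).
Proof.
have [->|tn0] := eqVneq t 0; last first.
  have -> : t = val (exist (fun r : latt => r != 0) t tn0) by [].
  by rewrite Hval HbrBB br_basis.
 rewrite H0 Hbr0l /beta om0l pK0r pK0l subr0 addr0.
by rewrite scale0r.
Qed.


Lemma HbrZl c x y : Hbr (c *: x) y = c *: Hbr x y.
Proof. exact: (islinZ c x (Hbr_linl y)). Qed.
Lemma HbrZr c x y : Hbr x (c *: y) = c *: Hbr x y.
Proof. exact: (islinZ c y (Hbr_linr x)). Qed.
Lemma HbrDl x1 x2 y : Hbr (x1 + x2) y = Hbr x1 y + Hbr x2 y.
Proof. exact: (islinD x1 x2 (Hbr_linl y)). Qed.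
Lemma HbrDr x y1 y2 : Hbr x (y1 + y2) = Hbr x y1 + Hbr x y2.
Proof. exact: (islinD y1 y2 (Hbr_linr x)). Qed.

Lemma kdv a : kdeg a = 0 \/ kvec a = 0.
Proof. by case: a => [r|i] /=; [right|left]. Qed.

Lemma jac_scalar p v q w s z :
  (p = 0 \/ v = 0) -> (q = 0 \/ w = 0) -> (s = 0 \/ z = 0) ->
  beta q w s z * beta p v (q + s) 0 =
  beta p v q w * beta (p + q) 0 s z + beta p v s z * beta q w (p + s) 0.
Proof.
move=> hp hq hs; rewrite /beta !omDl !omDr ?pKDl !pKDr !pK0l (om_anti q p).
case: hp => ->; case: hq => ->; case: hs => ->;
rewrite ?om0l ?om0r ?pK0l ?pK0r; ring.
Qed.

Lemma jacB a b c :
  Hbr (B a) (Hbr (B b) (B c)) = Hbr (Hbr (B a) (B b)) (B c) + Hbr (B b) (Hbr (B a) (B c)).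
Proof.
rewrite !HbrBB !br_basis HbrZl !HbrZr Hbr_BH Hbr_HB Hbr_BH !scalerA.
rewrite !addrA [kdeg b + kdeg a]addrC -scalerDl; congr (_ *: _).
by apply: jac_scalar; apply: kdv.
Qed.

Lemma islin_comp f g : islin f -> islin g -> islin (fun x => f (g x)).
Proof. by move=> hf hg c x y; rewrite hg hf. Qed.
Lemma islin_add f g : islin f -> islin g -> islin (fun x => f x + g x).
Proof.
move=> hf hg c x y; rewrite hf hg scalerDr -!addrA; congr (_ + _).
by rewrite addrCA.
Qed.
Lemma lin_ext f g : islin f -> islin g -> (forall a, f (B a) = g (B a)) ->
  forall x, f x = g x.
Proof. by move=> hf hg h x; rewrite (islinE x hf) (islinE x hg); apply: eq_Lx. Qed.

Lemma jacobi (x y z : HN) : Hbr x (Hbr y z) = Hbr (Hbr x y) z + Hbr y (Hbr x z).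
Proof.
have h1 a b : forall z : HN, Hbr (B a) (Hbr (B b) z) = Hbr (Hbr (B a) (B b)) z + Hbr (B b) (Hbr (B a) z).
  apply: lin_ext => [||c]; last exact: jacB.
  - exact: islin_comp (Hbr_linr _) (Hbr_linr _).
  - exact: islin_add (Hbr_linr _) (islin_comp (Hbr_linr _) (Hbr_linr _)).
have h2 a : forall y : HN, Hbr (B a) (Hbr y z) = Hbr (Hbr (B a) y) z + Hbr y (Hbr (B a) z).
  apply: lin_ext => [||b]; last exact: h1.
  - exact: islin_comp (Hbr_linr _) (Hbr_linl _).
  - exact: islin_add (islin_comp (Hbr_linl _) (Hbr_linr _)) (Hbr_linl _).
move: x; apply: lin_ext => [||a]; last exact: h2.
- exact: Hbr_linl.
- exact: islin_add (islin_comp (Hbr_linl _) (Hbr_linl _)) (islin_comp (Hbr_linr _) (Hbr_linl _)).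
Qed.


Lemma coefH_inl t (r : {r : latt | r != 0}) : (H t)@_(inl r) = (t == val r)%:R.
Proof.
have [->|tn0] := eqVneq t 0.
  by rewrite H0 mcoeff0 eq_sym (negPf (valP r)).
have -> : t = val (exist (fun r : latt => r != 0) t tn0) by [].
by rewrite Hval mcoefBB.
Qed.

Lemma coefH_inr t j : (H t)@_(inr j) = 0.
Proof.
have [->|tn0] := eqVneq t 0; first by rewrite H0 mcoeff0.
have -> : t = val (exist (fun r : latt => r != 0) t tn0) by [].
by rewrite Hval mcoefBB.
Qed.

Lemma HbrB_r y b : Hbr y (B b) = Lx (fun a => br a b) y.
Proof. by rewrite HbrE; apply: eq_Lx => a; rewrite LxB. Qed.
Lemma HbrB_l a y : Hbr (B a) y = Lx (br a) y.
Proof. by rewrite HbrE LxB. Qed.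

Lemma coefHbr_inr (x y : HN) j : (Hbr x y)@_(inr j) = 0.
Proof.
rewrite HbrE Lx_coef big1 // => a _; rewrite Lx_coef big1 ?mulr0 // => b _.
by rewrite br_basis mcoeffZ coefH_inr mulr0 mulr0.
Qed.

Lemma coefC1 (y : HN) j (s : {r : latt | r != 0}) :
  (Hbr y (B (inr j)))@_(inl s) = - (y@_(inl s) * ((val s) j 0)%:~R).
Proof.
rewrite HbrB_r Lx_coef (sum_pick _ (k0 := inl s)).
  rewrite br_basis mcoeffZ /= addr0 coefH_inl eqxx mulr1 /beta om0r pK0l pK_delta.
  by rewrite add0r sub0r mulrN.
case=> [r|i] ne; rewrite br_basis mcoeffZ /=; last by rewrite addr0 H0 mcoeff0 mulr0.
rewrite addr0 coefH_inl.
have -> : (val r == val s) = false.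
  by apply/negbTE; apply: contra ne => /eqP /val_inj ->.
by rewrite mulr0.
Qed.

Lemma coefC2 (y : HN) i (s : {r : latt | r != 0}) :
  (Hbr (B (inr i)) y)@_(inl s) = ((val s) i 0)%:~R * y@_(inl s).
Proof.
rewrite HbrB_l Lx_coef (sum_pick _ (k0 := inl s)).
  rewrite br_basis mcoeffZ /= add0r coefH_inl eqxx mulr1 /beta om0l pK0r pK_delta.
  by rewrite add0r subr0 mulrC.
case=> [r|j] ne; rewrite br_basis mcoeffZ /=; last by rewrite addr0 H0 mcoeff0 mulr0.
rewrite add0r coefH_inl.
have -> : (val r == val s) = false.
  by apply/negbTE; apply: contra ne => /eqP /val_inj ->.
by rewrite mulr0.
Qed.


Hypothesis char0 : [pchar K] =i pred0.

Lemma intK_eq0 (z : int) : (z%:~R == 0 :> K) = (z == 0).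
Proof.
have h := (pcharf0P K).1 char0.
case: z => n; first by rewrite /= h.
by rewrite NegzE intrN oppr_eq0 h oppr_eq0.
Qed.

Lemma latt_nz (s : latt) : s != 0 -> exists j, s j 0 != 0.
Proof.
move=> sn0; apply/existsP; apply: contraR sn0 => /existsPn h.
by apply/eqP/matrixP => i k; rewrite ord1 mxE; move/negPn/eqP: (h i).
Qed.

Lemma delta_nz (j : 'I_(m + m)) : (delta_mx j 0 : latt) != 0.
Proof. by apply/eqP => /matrixP /(_ j 0); rewrite !mxE !eqxx. Qed.

Lemma islin_sum f n (F : 'I_n -> HN) : islin f ->
  f (\sum_(i < n) F i) = \sum_(i < n) f (F i).
Proof.
move=> hf; apply: (big_morph f (fun x y => islinD x y hf) (islin0 hf)).
Qed.

Lemma hsum (y : HN) : (forall s : {r : latt | r != 0}, y@_(inl s) = 0) ->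
  y = \sum_(j < m + m) y@_(inr j) *: B (inr j).
Proof.
move=> h; apply/malgP => k; rewrite raddf_sum /=.
case: k => [s|j].
  rewrite h big1 // => j _; rewrite mcoeffZ mcoefBB /= mulr0 //.
rewrite (bigD1 j) //= big1 ?addr0 => [|i ij]; first by rewrite mcoeffZ mcoefBB eqxx mulr1.
rewrite mcoeffZ mcoefBB.
suff -> : (inr i == inr j :> HKey) = false by rewrite mulr0.
by apply/negbTE; apply: contra ij => /eqP [] ->.
Qed.

Lemma Hbr_hB (c : 'I_(m + m) -> K) (r : {r : latt | r != 0}) :
  Hbr (\sum_(j < m + m) c j *: B (inr j)) (B (inl r)) =
  (\sum_(j < m + m) c j * ((val r) j 0)%:~R) *: B (inl r).
Proof.
rewrite (islin_sum _ (Hbr_linl _)) scaler_suml; apply: eq_bigr => j _.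
by rewrite HbrZl HbrBB /= monoZ scalerA.
Qed.

Lemma Hbr_hd (c : 'I_(m + m) -> K) i :
  Hbr (\sum_(j < m + m) c j *: B (inr j)) (B (inr i)) = 0.
Proof.
rewrite (islin_sum _ (Hbr_linl _)) big1 // => j _.
by rewrite HbrZl HbrBB /= scaler0.
Qed.

Lemma ad_der (x : HN) : is_derivation (Hbr x).
Proof. split; [exact: Hbr_linr | exact: jacobi]. Qed.

Lemma HbrNl (x y : HN) : Hbr (- x) y = - Hbr x y.
Proof. by rewrite -scaleN1r HbrZl scaleN1r. Qed.
Lemma HbrNr (x y : HN) : Hbr x (- y) = - Hbr x y.
Proof. by rewrite -scaleN1r HbrZr scaleN1r. Qed.
Lemma HbrBl (x1 x2 y : HN) : Hbr (x1 - x2) y = Hbr x1 y - Hbr x2 y.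
Proof. by rewrite HbrDl HbrNl. Qed.
Lemma HbrBr (x y1 y2 : HN) : Hbr x (y1 - y2) = Hbr x y1 - Hbr x y2.
Proof. by rewrite HbrDr HbrNr. Qed.

Lemma der_sub D1 D2 : is_derivation D1 -> is_derivation D2 ->
  is_derivation (fun z : HN => D1 z - D2 z).
Proof.
move=> [l1 d1] [l2 d2]; split=> [c x y|x y].
  by rewrite l1 l2 scalerBr addrACA opprD.
by rewrite d1 d2 HbrBl HbrBr opprD addrACA.
Qed.

Lemma ad_inj (x : HN) : (forall z : HN, Hbr x z = 0) -> x = 0.
Proof.
move=> h.
have hl : forall s : {r : latt | r != 0}, x@_(inl s) = 0.
  move=> s; have [j sj] := latt_nz (valP s).
  have := coefC1 x j s; rewrite h mcoeff0 => /eqP; rewrite eq_sym oppr_eq0 mulf_eq0.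
  by rewrite intK_eq0 (negPf sj) orbF => /eqP.
rewrite (hsum hl); apply: big1 => j _.
pose r := exist (fun r : latt => r != 0) (delta_mx j 0) (delta_nz j).
have := h (B (inl r)); rewrite {1}(hsum hl) Hbr_hB => /(congr1 (mcoeff (inl r))).
rewrite mcoeffZ mcoefBB eqxx mulr1 mcoeff0 (bigD1 j) //= big1 ?addr0.
  by rewrite mxE !eqxx mulr1 => ->; rewrite scale0r.
by move=> i ij; rewrite mxE (negPf ij) mulr0.
Qed.


Lemma wiDr r s t : wi r (s + t) = wi r s + wi r t.
Proof. by rewrite /wi -big_split; apply: eq_bigr => i _; rewrite [(s + t) i 0]mxE mulrDr. Qed.
Lemma wiDl r s t : wi (r + s) t = wi r t + wi s t.
Proof. by rewrite /wi -big_split; apply: eq_bigr => i _; rewrite rbarD [(rbar r + rbar s) i 0]mxE mulrDl. Qed.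
Lemma wiZr r (n : int) s : wi r (n *: s) = n * wi r s.
Proof. by rewrite /wi mulr_sumr; apply: eq_bigr => i _; rewrite [(n *: s) i 0]mxE mulrCA. Qed.
Lemma wi0l s : wi 0 s = 0.
Proof. by rewrite /wi big1 // => i _; rewrite rbar0 [(0 : latt) i 0]mxE mul0r. Qed.
Lemma wi_self r : wi r r = 0.
Proof. have := wi_anti r r; lia. Qed.

Lemma JJ (r : latt) : rbar (rbar r) = - r.
Proof.
rewrite /rbar mulmxA /Jmx mulmx_block !mulmx0 !mul0mx !addr0 !add0r.
rewrite mulmxN mulNmx !mul1mx.
have -> : block_mx (- 1%:M) 0 0 (- 1%:M) = - (1%:M : 'M[int]_(m + m)).
  by rewrite (scalar_mx_block m m 1) opp_block_mx !oppr0.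
by rewrite mulNmx mul1mx.
Qed.

Lemma wi_nondeg r : r != 0 -> wi r (rbar r) != 0.
Proof.
move=> rn0; apply: contra rn0 => /eqP h.
have hz : forall i, (rbar r) i 0 = 0.
  move=> i; move: h; rewrite /wi => /eqP; rewrite psumr_eq0 => [|j _].
    by move=> /allP /(_ i) /=; rewrite mem_index_enum => /(_ isT) /eqP; lia.
  nia.
have : rbar r = 0 by apply/matrixP => i k; rewrite ord1 hz mxE.
move=> /(congr1 (@rbar m)); rewrite JJ rbar0 => /eqP; rewrite oppr_eq0. by [].
Qed.

Lemma le_sum_norm (f : latt -> int) (l : seq latt) b : b \in l ->
  `|f b| <= \sum_(c <- l) `|f c|.
Proof.
elim: l => [//|c l IH]; rewrite in_cons big_cons => /orP[/eqP->|bl].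
  by rewrite lerDl sumr_ge0.
by rewrite (le_trans (IH bl)) // lerDr.
Qed.

Lemma avoid (l : seq latt) : all (fun a => a != 0) l ->
  exists t, all (fun a => wi a t != 0) l.
Proof.
elim: l => [|a l IH] /=; first by exists 0.
move=> /andP[an0 /IH [t ht]].
have [hat|hat] := eqVneq (wi a t) 0; last by exists t; rewrite hat.
pose ta := rbar a; pose n : int := 1 + \sum_(c <- l) `|wi c ta|.
exists (ta + n *: t); apply/andP; split.
  by rewrite wiDr wiZr hat mulr0 addr0 wi_nondeg.
apply/allP => b bl; rewrite wiDr wiZr.
have h1 := le_sum_norm (fun c => wi c ta) bl.
have h2 : wi b t != 0 by move/allP: ht => /(_ b bl).
rewrite /n; move: h1 h2; set S := \sum_(_ <- _) _; set d := wi b ta; set e := wi b t.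
move=> h1 h2; nia.
Qed.


Section Additive.
Variable E : latt -> K.
Hypothesis E0 : E 0 = 0.
Hypothesis hE : forall r s, wi r s != 0 -> E (r + s) = E r + E s.

Lemma addE3 r s : r != 0 -> s != 0 -> r + s != 0 -> E (r + s) = E r + E s.
Proof.
move=> r0 s0 rs0.
have := @avoid [:: r + s; s; r]; rewrite /= rs0 s0 r0 => /(_ isT) [t /and4P [h1 h2 h3 _]].
have [t' [t1 t2 t3]] : exists t', [/\ wi (r + s) t' != 0, wi s t' != 0 & wi r (s + t') != 0].
  case: (eqVneq (wi r s + wi r t) 0) => h.
    exists (t + t); rewrite !wiDr; split; move: h1 h2 h3 h; lia.
  by exists t; rewrite wiDr.
have e1 := hE t1; have e2 := hE t3; have e3 := hE t2.
rewrite addrA e1 e3 addrA in e2.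
by move/(addIr (E t')): e2.
Qed.

Lemma dbl_nz r : r != 0 -> r + r != 0.
Proof.
move=> r0; apply: contra r0 => /eqP h; apply/eqP/matrixP => i j.
by move/matrixP: h => /(_ i j); rewrite !mxE -mulr2n => /eqP; rewrite mulrn_eq0 /= => /eqP.
Qed.

Lemma EN r : E (- r) = - E r.
Proof.
have [->|r0] := eqVneq r 0; first by rewrite oppr0 E0 oppr0.
have e1 := addE3 r0 r0 (dbl_nz r0).
have e2 : E (- r + (r + r)) = E (- r) + E (r + r).
  apply: addE3; rewrite ?oppr_eq0 ?dbl_nz //.
  by rewrite addrA addNr add0r.
move: e2; rewrite addrA addNr add0r e1 => /eqP; rewrite -subr_eq => /eqP <-.
by rewrite opprD addrA subrr sub0r.
Qed.

Lemma Eadd r s : E (r + s) = E r + E s.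
Proof.
have [->|r0] := eqVneq r 0; first by rewrite add0r E0 add0r.
have [->|s0] := eqVneq s 0; first by rewrite addr0 E0 addr0.
have [rs|rs0] := eqVneq (r + s) 0; last exact: addE3.
have -> : s = - r by apply/eqP; rewrite -addr_eq0 addrC rs.
by rewrite subrr E0 EN subrr.
Qed.

Lemma EZn (n : nat) v : E (n%:Z *: v) = n%:R * E v.
Proof.
elim: n => [|n IH]; first by rewrite scale0r E0 mul0r.
by rewrite intS scalerDl scale1r Eadd IH mulrS mulrDl mul1r.
Qed.

Lemma EZ (c : int) v : E (c *: v) = c%:~R * E v.
Proof.
case: c => n; first by rewrite EZn.
by rewrite NegzE scaleNr EN EZn intrN mulNr.
Qed.

Lemma E_expand t : E t = \sum_(j < m + m) E (delta_mx j 0) * (t j 0)%:~R.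
Proof.
rewrite {1}(matrix_sum_delta t) (big_morph E Eadd E0).
apply: eq_bigr => j _; rewrite big_ord1 EZ mulrC.
by congr (_ * _ %:~R); congr (t j _); apply/val_inj; case: (0 : 'I_1).
Qed.
End Additive.


Notation nzl := {r : latt | r != 0}.

Lemma coef_sumB (S : {fset HKey}) (c : HKey -> K) k0 :
  (forall k, k \notin S -> c k = 0) -> (\sum_(k <- S) c k *: B k)@_k0 = c k0.
Proof.
move=> h; rewrite raddf_sum /=.
under eq_bigr do rewrite mcoeffZ mcoefBB.
have [k0S|k0S] := boolP (k0 \in S).
  rewrite (big_fsetD1 k0) //= eqxx mulr1 big1_fset ?addr0 // => k.
  by rewrite in_fsetD1 => /andP [ne _] _; rewrite (negPf ne) mulr0.
rewrite h // big1_fset // => k kS _.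
have ne : k != k0 by apply: contraNneq k0S => <-.
by rewrite (negPf ne) mulr0.
Qed.

Lemma HbrHH r s : Hbr (H r) (H s) = om r s *: H (r + s).
Proof.
have [->|r0] := eqVneq r 0; first by rewrite H0 Hbr0l om0l scale0r.
have -> : r = val (exist (fun r : latt => r != 0) r r0) by [].
by rewrite Hval Hbr_BH /= /beta !pK0l subr0 addr0.
Qed.

Lemma coefH_self (u : nzl) : (H (val u))@_(inl u) = 1.
Proof. by rewrite coefH_inl eqxx. Qed.

Lemma islin_der D : is_derivation D -> islin D.
Proof. by case. Qed.

End A.

Section Bsec.
Variables (K : fieldType) (m : nat).
Hypothesis char0 : [pchar K] =i pred0.
Local Notation HN := (HN K m).
Local Notation HKey := (HKey m).
Local Notation latt := (latt m).
Local Notation Hbr := (@Hbr K m).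
Local Notation br := (@basis_br K m).
Local Notation pK := (@pairK K m).
Local Notation B := (@B K m).
Local Notation H := (@H K m).
Local Notation nzl := {r : latt | r != 0}.

Lemma step1 D : is_derivation D ->
  exists x : HN, forall i, forall s : nzl, (D (B (inr i)) - Hbr x (B (inr i)))@_(inl s) = 0.
Proof.
move=> [Dl Dd]; have D0 : D 0 = 0 := islin0 Dl.
pose y i := D (B (inr i)).
have rel i j (s : nzl) : (y i)@_(inl s) * ((val s) j 0)%:~R = ((val s) i 0)%:~R * (y j)@_(inl s).
  have := Dd (B (inr i)) (B (inr j)); rewrite HbrBB /= D0 => /(congr1 (mcoeff (inl s))).
  rewrite mcoeff0 mcoeffD coefC1 coefC2 => /eqP; rewrite eq_sym addrC subr_eq0 => /eqP.
  by [].
pose S := (\bigcup_(i <- enum 'I_(m + m)) msupp (y i))%fset.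
pose ns (s : latt) : K := (\sum_(j < m + m) s j 0 * s j 0)%:~R.
pose cf (k : HKey) : K := match k with
  | inl s => - (\sum_(j < m + m) ((val s) j 0)%:~R * (y j)@_(inl s)) / ns (val s)
  | inr _ => 0 end.
exists (\sum_(k <- S) cf k *: B k) => i s.
have hx k : (\sum_(k <- S) cf k *: B k)@_k = cf k.
  apply: coef_sumB => -[s'|j] //= kS.
  rewrite big1 ?oppr0 ?mul0r // => j _.
  have : inl s' \notin msupp (y j).
    apply: contra kS => kin.
    exact: (fsubsetP (@bigfcup_sup _ _ (enum 'I_(m + m)) j xpredT (fun i => msupp (y i)) (mem_enum _ j) isT)) kin.
  by move/mcoeff_outdom ->; rewrite mulr0.
rewrite mcoeffB coefC1 hx opprK /=.
have ns0 : ns (val s) != 0.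
  rewrite /ns intK_eq0 //; apply: contra (valP s) => /eqP h.
  apply/eqP/matrixP => a b; rewrite ord1 mxE.
  move: h => /eqP; rewrite psumr_eq0 => [|j _]; last by nia.
  by move=> /allP /(_ a) /=; rewrite mem_index_enum => /(_ isT) /eqP; nia.
have hP : (\sum_(j < m + m) ((val s) j 0)%:~R * (y j)@_(inl s)) * ((val s) i 0)%:~R
          = (y i)@_(inl s) * ns (val s).
  rewrite mulr_suml /ns rmorph_sum mulr_sumr; apply: eq_bigr => j _.
  by rewrite -mulrA [_ * ((val s) i 0)%:~R]mulrC -rel mulrCA -[RHS]/(_ * (_ * _)%:~R) intrM.
rewrite !mulNr mulrAC hP mulfK //.
by rewrite /y subrr.
Qed.


Lemma step2 D : is_derivation D ->
  (forall i (s : nzl), (D (B (inr i)))@_(inl s) = 0) ->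
  exists d : HN, forall z, D z = Hbr d z.
Proof.
move=> [Dl Dd] hD; have D0 : D 0 = 0 := islin0 Dl.
have DZ c z : D (c *: z) = c *: D z by apply: islinZ.
pose b i j := (D (B (inr i)))@_(inr j).
have Dd_eq i : D (B (inr i)) = \sum_(j < m + m) b i j *: B (inr j) by apply: hsum.
have relt i (t : nzl) : ((val t) i 0)%:~R *: D (B (inl t)) =
    Hbr (D (B (inr i))) (B (inl t)) + Hbr (B (inr i)) (D (B (inl t))).
  by rewrite -Dd HbrBB /= monoZ DZ.
have hb i j : b i j = 0.
  pose t := exist (fun r : latt => r != 0) (delta_mx j 0) (delta_nz j).
  have := relt i t; rewrite Dd_eq Hbr_hB => /(congr1 (mcoeff (inl t))).
  rewrite mcoeffD mcoeffZ coefC2 mcoeffZ mcoefBB eqxx mulr1 => /eqP.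
  rewrite -subr_eq subrr eq_sym => /eqP.
  rewrite (bigD1 j) //= big1 ?addr0; first by rewrite mxE !eqxx mulr1 => ->.
  by move=> k kj; rewrite mxE (negPf kj) mulr0.
have Dd0 i : D (B (inr i)) = 0.
  by rewrite Dd_eq big1 // => j _; rewrite hb scale0r.
have Dh (t : nzl) : D (B (inl t)) = (D (B (inl t)))@_(inl t) *: B (inl t).
  have rel' i : ((val t) i 0)%:~R *: D (B (inl t)) = Hbr (B (inr i)) (D (B (inl t))).
    by rewrite relt Dd0 Hbr0l add0r.
  have [i0 hi0] := latt_nz (valP t).
  apply/malgP => -[s|j]; rewrite mcoeffZ mcoefBB.
  - have [->|ne] := eqVneq s t; first by rewrite eqxx mulr1.
    have -> : (inl t == inl s :> HKey) = false.
      by apply/negbTE; apply: contra ne => /eqP [] ->.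
    rewrite mulr0.
    have : val t - val s != 0.
      by rewrite subr_eq0; apply: contra ne => /eqP /val_inj ->.
    move=> /latt_nz [i hi].
    have := rel' i => /(congr1 (mcoeff (inl s))); rewrite mcoeffZ coefC2 => /eqP.
    rewrite -subr_eq0 -mulrBl mulf_eq0 -intrB intK_eq0 //.
    by move: hi; rewrite !mxE => /negPf -> /= /eqP.
  - rewrite mulr0.
    have := rel' i0 => /(congr1 (mcoeff (inr j))); rewrite mcoeffZ coefHbr_inr => /eqP.
    by rewrite mulf_eq0 intK_eq0 // (negPf hi0) /= => /eqP.
pose E' (t : latt) : K := oapp (fun u : nzl => (D (B (inl u)))@_(inl u)) 0 (insub t).
have DH t : D (H t) = E' t *: H t.
  have [->|t0] := eqVneq t 0; first by rewrite H0 D0 scaler0.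
  have -> : t = val (exist (fun r : latt => r != 0) t t0) by [].
  by rewrite Hval /E' valK /=; apply: Dh.
have E0 : E' 0 = 0 by rewrite /E' insubF // eqxx.
have hE r s : wi r s != 0 -> E' (r + s) = E' r + E' s.
  move=> w0.
  have rs0 : r + s != 0.
    apply: contra w0 => /eqP h.
    have -> : s = (-1) *: r by rewrite scaleN1r; apply/eqP; rewrite -addr_eq0 addrC h.
    by rewrite wiZr wi_self mulr0.
  have := Dd (H r) (H s); rewrite HbrHH DZ !DH HbrZl HbrZr !HbrHH !scalerA -scalerDl.
  move=> /(congr1 (mcoeff (inl (exist (fun r : latt => r != 0) (r + s) rs0)))).
  rewrite !mcoeffZ coefH_inl eqxx mulr1 mulrC -mulrDl omE.
  have wK : (wi r s)%:~R != 0 :> K by rewrite intK_eq0.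
  by move=> h; apply: (mulIf wK); rewrite h mulr1.
have Eexp := E_expand E0 hE.
exists (\sum_(j < m + m) E' (delta_mx j 0) *: B (inr j)).
apply: lin_ext => [||[t|i]]; [exact: Dl | exact: Hbr_linr | |].
- rewrite Dh Hbr_hB; congr (_ *: _).
  by rewrite -Eexp /E' valK.
- by rewrite Dd0 Hbr_hd.
Qed.


Lemma inner D : is_derivation D -> exists x : HN, D = Hbr x.
Proof.
move=> hD; have [x hx] := step1 hD.
have hD1 := der_sub hD (ad_der x).
have [d hd] := step2 hD1 hx.
exists (d + x); apply: functional_extensionality => z.
by rewrite HbrDl -hd subrK.
Qed.

Lemma ad_inj2 (a b : HN) : Hbr a = Hbr b -> a = b.
Proof.
move=> h; apply/eqP; rewrite -subr_eq0; apply/eqP; apply: (ad_inj char0) => z.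
by rewrite HbrBl h subrr.
Qed.

Definition phi (D : HN -> HN) : HN :=
  epsilon (inhabits (0 : HN)) (fun x => D = Hbr x).

Lemma phiP D : is_derivation D -> D = Hbr (phi D).
Proof. by move=> hD; apply: (epsilon_spec (inhabits (0 : HN)) (fun x => D = Hbr x)); apply: inner. Qed.

Lemma phi_ad y : phi (Hbr y) = y.
Proof. by apply: ad_inj2; rewrite -phiP //; apply: ad_der. Qed.

Lemma Der_iso_sec : Der_iso_HN K m.
Proof.
exists phi; split.
- move=> a b D1 D2 h1 h2.
  move: (phiP h1) (phiP h2); move: (phi D1) (phi D2) => x1 x2 E1 E2; subst D1 D2.
  have -> : (fun x => a *: Hbr x1 x + b *: Hbr x2 x) = Hbr (a *: x1 + b *: x2).
    by apply: functional_extensionality => z; rewrite HbrDl !HbrZl.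
  exact: phi_ad.
- move=> D1 D2 h1 h2.
  move: (phiP h1) (phiP h2); move: (phi D1) (phi D2) => x1 x2 E1 E2; subst D1 D2.
  have -> : (fun x => Hbr x1 (Hbr x2 x) - Hbr x2 (Hbr x1 x)) = Hbr (Hbr x1 x2).
    by apply: functional_extensionality => z; rewrite jacobi addrK.
  exact: phi_ad.
- by move=> D1 D2 h1 h2 e; rewrite (phiP h1) (phiP h2) e.
- by move=> y; exists (Hbr y); [apply: ad_der | apply: phi_ad].
Qed.

End Bsec.

Theorem theorem4p6 (K : closedFieldType) (m : nat) :
  [pchar K] =i pred0 -> (0 < m)%N -> Der_iso_HN K m.
Proof. by move=> h _; apply: Der_iso_sec. Qed.
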